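(* Let $\mathfrak A=\langle A,f,g\rangle$ be a betweenness algebra (resp. weak, strong betweenness algebra). Then the Stone map $h\colon A\to 2^{\mathrm{Ult}(A)}$, $h(x)=\{\mathcal U\in\mathrm{Ult}(A)\mid x\in\mathcal U\}$, is an embedding of $\mathfrak A$ into the algebra $\mathrm{Em}^{ps}(\mathfrak A)=\langle 2^{\mathrm{Ult}(A)},\langle Q_f\rangle,[\![S_g]\!]\rangle$, and $\mathrm{Em}^{ps}(\mathfrak A)$ is a betweenness algebra (resp. weak, strong betweenness algebra).
   Context: A PS-algebra is $\langle A,f,g\rangle$, $A$ a Boolean algebra with at least two elements (operations $+,\cdot,-,0,1$), $f,g\colon A^2\to A$, $f$ normal ($f(x,y)=0$ if $x=0$ or $y=0$) and additive in each argument, $g$ co-normal ($g(x,y)=1$ if $x=0$ or $y=0$) and co-additive in each argument ($g(x+x',y)=g(x,y)g(x',y)$, $g(x,y+y')=g(x,y)g(x,y')$). Axioms (for all $x,y,z,a,b$): (ABT0) $x\leq f(x,x)$; (ABT1$_f$) $f(x,y)\leq f(y,x)$; (ABT1$_g$) $g(x,y)\leq g(y,x)$; (ABT2) $y\cdot f(x,z)\leq f(x\cdot f(x,y),z)$; (ABT3) $f(x,g(x,-y)\cdot y)\leq y$; (wMIA) $x\neq0,y\neq0\Rightarrow g(x,y)\leq f(x,y)$; (ABTW) $a\neq0\Rightarrow g(a,a)\leq a$; (ABT2$^{\mathrm s}$) $b\neq0\Rightarrow a\leq f(a,b)$. Betweenness algebra: (ABT0),(ABT1$_f$),(ABT1$_g$),(ABT2),(ABT3),(wMIA).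 Weak betweenness algebra: (ABT0),(ABT1$_f$),(ABT1$_g$),(ABT2),(ABTW). Strong betweenness algebra: (ABT1$_f$),(ABT1$_g$),(ABT3),(wMIA),(ABT2$^{\mathrm s}$). $\mathrm{Ult}(A)$ is the set of ultrafilters of $A$; $Q_f(\mathcal U_1,\mathcal U_2,\mathcal U_3)\iff f[\mathcal U_1\times\mathcal U_3]\subseteq\mathcal U_2$; $S_g(\mathcal U_1,\mathcal U_2,\mathcal U_3)\iff g[\mathcal U_1\times\mathcal U_3]\cap\mathcal U_2\neq\emptyset$. For a ternary relation $R$ on a set $W$ and $X,Y\subseteq W$: $\langle R\rangle(X,Y)=\{u\in W\mid\exists x\in X\,\exists y\in Y\,R(x,u,y)\}$ and $[\![R]\!](X,Y)=\{u\in W\mid\forall x\in X\,\forall y\in Y\,R(x,u,y)\}$. An embedding is an injective map preserving the Boolean operations and $f,g$. *)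

(* Defs.v *)
From HB Require Import structures.
From mathcomp Require Import all_boot all_order.
From mathcomp Require Import boolp classical_sets.
Set Implicit Arguments. Unset Strict Implicit. Unset Printing Implicit Defensive.
Import Order.TTheory.

(* A Boolean algebra is a complemented distributive lattice with top and bottom
   (ctbDistrLatticeType): + = Order.join, . = Order.meet, - = Order.compl,
   0 = \bot, 1 = \top. *)

Section PS.
Context {d : Order.disp_t} (A : ctbDistrLatticeType d).
Local Open Scope order_scope.
Implicit Types (f g : A -> A -> A).

Definition nontrivialBA : Prop := (\bot : A) <> \top.

Definition normal f : Prop := forall x y : A, (x = \bot \/ y = \bot) -> f x y = \bot.
Definition additive f : Prop :=
  (forall x x' y, f (Order.join x x') y = Order.join (f x y) (f x' y)) /\
  (forall x y y', f x (Order.join y y') = Order.join (f x y) (f x y')).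
Definition conormal g : Prop := forall x y : A, (x = \bot \/ y = \bot) -> g x y = \top.
Definition coadditive g : Prop :=
  (forall x x' y, g (Order.join x x') y = Order.meet (g x y) (g x' y)) /\
  (forall x y y', g x (Order.join y y') = Order.meet (g x y) (g x y')).

Definition PS_algebra f g : Prop :=
  [/\ nontrivialBA, normal f, additive f, conormal g & coadditive g].

Definition ABT0 f : Prop := forall x : A, x <= f x x.
Definition ABT1f f : Prop := forall x y : A, f x y <= f y x.
Definition ABT1g g : Prop := forall x y : A, g x y <= g y x.
Definition ABT2 f : Prop :=
  forall x y z : A, Order.meet y (f x z) <= f (Order.meet x (f x y)) z.
Definition ABT3 f g : Prop :=
  forall x y : A, f x (Order.meet (g x (Order.compl y)) y) <= y.
Definition wMIA f g : Prop :=
  forall x y : A, x <> \bot -> y <> \bot -> g x y <= f x y.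
Definition ABTW g : Prop := forall a : A, a <> \bot -> g a a <= a.
Definition ABT2s f : Prop := forall a b : A, b <> \bot -> a <= f a b.

Definition betweenness_algebra f g : Prop :=
  PS_algebra f g /\ ABT0 f /\ ABT1f f /\ ABT1g g /\ ABT2 f /\ ABT3 f g /\ wMIA f g.
Definition weak_betweenness_algebra f g : Prop :=
  PS_algebra f g /\ ABT0 f /\ ABT1f f /\ ABT1g g /\ ABT2 f /\ ABTW g.
Definition strong_betweenness_algebra f g : Prop :=
  PS_algebra f g /\ ABT1f f /\ ABT1g g /\ ABT3 f g /\ wMIA f g /\ ABT2s f.

Definition ultrafilter (U : set A) : Prop :=
  [/\ U \top, ~ U \bot,
      (forall x y, U x -> U y -> U (Order.meet x y)),
      (forall x y, U x -> x <= y -> U y) &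
      (forall x, U x \/ U (Order.compl x))].

Definition Ult : Type := {U : set A | ultrafilter U}.

Definition Q_f f (U1 U2 U3 : Ult) : Prop :=
  forall x y, proj1_sig U1 x -> proj1_sig U3 y -> proj1_sig U2 (f x y).
Definition S_g g (U1 U2 U3 : Ult) : Prop :=
  exists x y, [/\ proj1_sig U1 x, proj1_sig U3 y & proj1_sig U2 (g x y)].

Definition stone (x : A) : set Ult := fun U => proj1_sig U x.
End PS.

Definition diamondR {W : Type} (R : W -> W -> W -> Prop) (X Y : set W) : set W :=
  fun u => exists x y, [/\ X x, Y y & R x u y].
Definition boxR {W : Type} (R : W -> W -> W -> Prop) (X Y : set W) : set W :=
  fun u => forall x y, X x -> Y y -> R x u y.

Definition Em_f {d} {A : ctbDistrLatticeType d} (f : A -> A -> A) :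
  set (Ult A) -> set (Ult A) -> set (Ult A) := diamondR (Q_f f).
Definition Em_g {d} {A : ctbDistrLatticeType d} (g : A -> A -> A) :
  set (Ult A) -> set (Ult A) -> set (Ult A) := boxR (S_g g).

Definition embedding {d d'} {A : ctbDistrLatticeType d} {B : ctbDistrLatticeType d'}
  (f g : A -> A -> A) (f' g' : B -> B -> B) (h : A -> B) : Prop :=
  injective h /\
  [/\ (forall x y, h (Order.join x y) = Order.join (h x) (h y)),
      (forall x y, h (Order.meet x y) = Order.meet (h x) (h y)),
      (forall x, h (Order.compl x) = Order.compl (h x)),
      (h Order.bottom = Order.bottom /\ h Order.top = Order.top) &
      ((forall x y, h (f x y) = f' (h x) (h y)) /\ (forall x y, h (g x y) = g' (h x) (h y)))].

(* Main.v *)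
Require Import Defs.
From mathcomp Require Import all_boot all_order.
From mathcomp Require Import boolp classical_sets.
Set Implicit Arguments. Unset Strict Implicit. Unset Printing Implicit Defensive.
Import Order.TTheory Order.Theory.

Section UF.
Context {d : Order.disp_t} (A : ctbDistrLatticeType d).
Local Open Scope order_scope.
Implicit Types (x y a b c : A) (U : set A).

Lemma uf_up U x y : ultrafilter U -> U x -> x <= y -> U y.
Proof. by case=> _ _ _ H _; apply: H. Qed.
Lemma uf_meet U x y : ultrafilter U -> U x -> U y -> U (x `&` y).
Proof. by case=> _ _ H _ _; apply: H. Qed.
Lemma uf_meetE U x y : ultrafilter U -> U (x `&` y) <-> U x /\ U y.
Proof.
move=> HU; split; last by case=> ??; apply: uf_meet.
by move=> H; split; apply: (uf_up HU H); rewrite ?leIl ?leIr.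
Qed.
Lemma uf_nbot U : ultrafilter U -> ~ U \bot.
Proof. by case. Qed.
Lemma uf_top U : ultrafilter U -> U \top.
Proof. by case. Qed.
Lemma uf_ne0 U x : ultrafilter U -> U x -> x <> \bot.
Proof. by move=> HU Ux E; apply: (uf_nbot HU); rewrite -E. Qed.
Lemma uf_compl U x : ultrafilter U -> U (~` x) <-> ~ U x.
Proof.
move=> HU; split.
  by move=> H1 H2; apply: (uf_nbot HU); rewrite -(meetxC x); apply: uf_meet.
by case: HU => _ _ _ _ /(_ x) [].
Qed.
Lemma uf_join U x y : ultrafilter U -> U (x `|` y) <-> U x \/ U y.
Proof.
move=> HU; split; last first.
  by case=> H; apply: (uf_up HU H); rewrite ?leUl ?leUr.
move=> H; case: (pselect (U x)) => Hx; [by left|right].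
have Hc : U (~` x) by apply/uf_compl.
have := uf_meet HU Hc H; rewrite meetUr meetCx join0x => H'.
by apply: (uf_up HU H'); rewrite leIr.
Qed.

Definition ideal (J : set A) : Prop :=
  [/\ J \bot, (forall a b, J a -> J b -> J (a `|` b)) & (forall a b, J a -> b <= a -> J b)].

Lemma uf_exists (J : set A) x : ideal J -> ~ J x ->
  exists U : Ult A, proj1_sig U x /\ forall a, proj1_sig U a -> ~ J a.
Proof.
move=> [J0 JU Jd] Jx.
pose P (I : set A) := (forall a b, (I `|` J)%classic a -> (I `|` J)%classic b -> forall c, c <= a `|` b -> (I `|` J)%classic c)
   /\ ~ (I `|` J)%classic x.
have [M [[PM1 PM2] Mmax]] : exists M, P M /\ forall B, (M `<` B)%classic -> ~ P B.
  apply: Zorn_bigcup => F FP Ftot; split.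
    move=> a b [[Ia FIa Ia_a]|Ja] [[Ib FIb Ib_b]|Jb] c cle.
    - have [IaIb|IbIa] := Ftot _ _ FIa FIb.
      + have [+ _] := FP _ FIb => /(_ a b (or_introl (IaIb _ Ia_a)) (or_introl Ib_b) c cle).
        by case=> H; [left; exists Ib|right].
      + have [+ _] := FP _ FIa => /(_ a b (or_introl Ia_a) (or_introl (IbIa _ Ib_b)) c cle).
        by case=> H; [left; exists Ia|right].
    - have [+ _] := FP _ FIa => /(_ a b (or_introl Ia_a) (or_intror Jb) c cle).
      by case=> H; [left; exists Ia|right].
    - have [+ _] := FP _ FIb => /(_ a b (or_intror Ja) (or_introl Ib_b) c cle).
      by case=> H; [left; exists Ib|right].
    - by right; apply: Jd (JU _ _ Ja Jb) cle.
  case=> [[I FI Ix]|//].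
  by have [_ +] := FP _ FI; apply; left.
pose Mi := (M `|` J)%classic.
have Mi0 : Mi \bot by right.
have MiU a b : Mi a -> Mi b -> Mi (a `|` b) by move=> Ha Hb; apply: PM1 Ha Hb _ (lexx _).
have Mid a b : Mi a -> b <= a -> Mi b.
  by move=> Ha le; apply: PM1 Ha Mi0 _ _; rewrite joinx0.
have prime a : Mi a \/ Mi (~` a).
  apply: contrapT => /not_orP [Na NCa].
  have key b : ~ Mi b -> exists2 m, Mi m & x <= m `|` b.
    move=> Nb; apply: contrapT => Hno.
    pose B := fun c => exists2 m, Mi m & c <= m `|` b.
    have MB : (M `<` B)%classic.
      split.
        move=> c Mc; exists c; first by left.
        by rewrite leUl.
      move=> H; apply: Nb; have : B b by exists \bot; rewrite ?join0x.
      by move/H => Mb; left.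
    apply: (Mmax _ MB); split.
      have BJ : forall c, (B `|` J)%classic c -> B c.
        by move=> c [//|Jc]; exists c; [right|rewrite leUl].
      move=> c1 c2 /BJ [m1 Hm1 le1] /BJ [m2 Hm2 le2] c cle; left.
      exists (m1 `|` m2); first exact: MiU.
      apply: (le_trans cle).
      rewrite leUx; apply/andP; split.
        apply: (le_trans le1); rewrite leUx leUr andbT.
        by apply: lexUl; rewrite leUl.
      apply: (le_trans le2); rewrite leUx leUr andbT.
      by apply: lexUl; rewrite leUr.
    case=> [|Jx']; last by apply: PM2; right.
    by case=> m Hm le; apply: Hno; exists m.
  have [m1 H1 le1] := key _ Na.
  have [m2 H2 le2] := key _ NCa.
  apply: PM2; apply: (Mid (m1 `|` m2)); first exact: MiU.
  have : x <= ((m1 `|` m2) `|` a) `&` ((m1 `|` m2) `|` ~` a).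
    rewrite lexI; apply/andP; split.
      apply: (le_trans le1); apply: leU2 (lexx _); exact: leUl.
    apply: (le_trans le2); apply: leU2 (lexx _); exact: leUr.
  by rewrite -joinIr meetxC joinx0.
pose V := fun a => Mi (~` a).
have HV : ultrafilter V.
  split.
  - by rewrite /V compl1.
  - rewrite /V compl0 => Mt; apply: PM2; apply: Mid Mt _; exact: lex1.
  - by move=> a b Va Vb; rewrite /V complI; apply: MiU.
  - by move=> a b Va le; apply: Mid Va _; rewrite leC.
  - by move=> a; rewrite /V complK; case: (prime a); [right|left].
exists (exist _ V HV) => /=; split.
  by case: (prime x) => // Mx; exfalso; apply: PM2.
move=> a Va Ja; apply: PM2; apply: Mid (lex1 x).
by rewrite -(joinxC a); apply: MiU => //; right.
Qed.

End UF.

Section JT.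
Context {d : Order.disp_t} (A : ctbDistrLatticeType d).
Local Open Scope order_scope.
Implicit Types (x y a b c : A).

Definition sv (U : Ult A) : set A := proj1_sig U.
Lemma svP (U : Ult A) : ultrafilter (sv U).
Proof. exact: proj2_sig U. Qed.

Lemma mono_l (k : A -> A -> A) : additive k -> forall a a' b, a <= a' -> k a b <= k a' b.
Proof.
move=> [kl _] a a' b /join_idPr <-; rewrite kl; exact: leUl.
Qed.
Lemma mono_r (k : A -> A -> A) : additive k -> forall a b b', b <= b' -> k a b <= k a b'.
Proof.
move=> [_ kr] a b b' /join_idPr <-; rewrite kr; exact: leUl.
Qed.

Lemma JT (k : A -> A -> A) (U : Ult A) x y : normal k -> additive k ->
  sv U (k x y) -> exists U1 U3 : Ult A, [/\ sv U1 x, sv U3 y & Q_f k U1 U U3].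
Proof.
move=> kn ka Ukxy.
have HU := svP U.
pose J1 := fun a => ~ sv U (k a y).
have J1i : ideal J1.
  split.
  - by rewrite /J1 kn; [apply: uf_nbot|left].
  - move=> a b Ja Jb; rewrite /J1 (proj1 ka) => /(uf_join _ _ HU) [];  [exact: Ja|exact: Jb].
  - move=> a b Ja le Hb; apply: Ja; apply: (uf_up HU Hb); exact: mono_l.
have [U1 [U1x U1J]] := uf_exists J1i (fun H => H Ukxy).
have HU1 := svP U1.
pose J2 := fun b => exists2 a, sv U1 a & ~ sv U (k a b).
have J2i : ideal J2.
  split.
  - exists \top; first exact: uf_top.
    by rewrite kn; [apply: uf_nbot|right].
  - move=> b b' [a Ha Hb] [a' Ha' Hb']; exists (a `&` a'); first exact: uf_meet.
    rewrite (proj2 ka) => /(uf_join _ _ HU) [H|H].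
      by apply: Hb; apply: (uf_up HU H); apply: mono_l => //; exact: leIl.
    by apply: Hb'; apply: (uf_up HU H); apply: mono_l => //; exact: leIr.
  - move=> b b' [a Ha Hb] le; exists a => // H; apply: Hb.
    by apply: (uf_up HU H); apply: mono_r.
have J2y : ~ J2 y.
  by case=> a Ha Hn; apply: (U1J a Ha).
have [U3 [U3y U3J]] := uf_exists J2i J2y.
exists U1, U3; split => // a b Ha Hb.
by apply: contrapT => N; apply: (U3J b Hb); exists a.
Qed.

End JT.

Section Emb.
Context {d : Order.disp_t} (A : ctbDistrLatticeType d).
Local Open Scope order_scope.
Implicit Types (x y a b c : A).

Lemma ideal0 : ideal (fun a : A => a = \bot).
Proof.
split => //; first by move=> a b -> ->; rewrite joinxx.
by move=> a b -> le; apply/eqP; rewrite -lex0.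
Qed.

Lemma uf_of x : x <> \bot -> exists U : Ult A, sv U x.
Proof.
by move=> Hx; have [U [HU _]] := uf_exists ideal0 Hx; exists U.
Qed.

Lemma stone_le x y : (forall U : Ult A, sv U x -> sv U y) -> x <= y.
Proof.
move=> H; apply: contrapT => Nxy.
have : x `&` ~` y <> \bot.
  move=> E; apply: Nxy.
  have -> : x = x `&` y.
    by rewrite -{1}(meetx1 x) -(joinxC y) meetUr E joinx0.
  exact: leIr.
move/uf_of => [U HU].
have := svP U => HUf.
have [Ux Uy] := proj1 (uf_meetE _ _ HUf) HU.
by apply: (proj1 (uf_compl _ HUf) Uy); apply: H.
Qed.

Lemma stone_inj : injective (@stone d A).
Proof.
move=> x y E; apply: le_anti; apply/andP; split; apply: stone_le => U;
  have E' : proj1_sig U x = proj1_sig U y := f_equal (fun S => S U) E.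
  by rewrite /sv -E'.
by rewrite /sv E'.
Qed.

Lemma stone_f (k : A -> A -> A) : normal k -> additive k ->
  forall x y, stone (k x y) = diamondR (Q_f k) (stone x) (stone y).
Proof.
move=> kn ka x y; apply/seteqP; split => U /=.
  move=> H; have [U1 [U3 [H1 H3 HQ]]] := JT kn ka H.
  by exists U1, U3.
by case=> U1 [U3 [H1 H3 HQ]]; apply: HQ.
Qed.

Lemma stone_g (g : A -> A -> A) : conormal g -> coadditive g ->
  forall x y, stone (g x y) = boxR (S_g g) (stone x) (stone y).
Proof.
move=> gn ga x y; apply/seteqP; split => U /=.
  by move=> H U1 U3 H1 H3; exists x, y.
move=> H; apply: contrapT => N.
pose k := fun a b => ~` (g a b).
have kn : normal k by move=> a b ab; rewrite /k gn // compl1.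
have ka : additive k.
  by split=> *; rewrite /k ?(proj1 ga) ?(proj2 ga) complI.
have HU := svP U.
have : sv U (k x y) by apply/(uf_compl _ HU).
move/(JT kn ka) => [U1 [U3 [H1 H3 HQ]]].
have [a [b [Ha Hb Hg]]] := H U1 U3 H1 H3.
by apply: (proj1 (uf_compl _ HU) (HQ a b Ha Hb)).
Qed.

Lemma embed (f g : A -> A -> A) : PS_algebra f g ->
  embedding f g (Em_f f) (Em_g g) (@stone d A).
Proof.
case=> _ fn fa gn ga; split; first exact: stone_inj.
split.
- move=> x y; rewrite joinEset; apply/seteqP; split => U /=;
  [exact: (proj1 (uf_join _ _ (svP U))) | exact: (proj2 (uf_join _ _ (svP U)))].
- move=> x y; rewrite meetEset; apply/seteqP; split => U /=;
  [exact: (proj1 (uf_meetE _ _ (svP U))) | exact: (proj2 (uf_meetE _ _ (svP U)))].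
- move=> x; rewrite complEset; apply/seteqP; split => U /=;
  [exact: (proj1 (uf_compl _ (svP U))) | exact: (proj2 (uf_compl _ (svP U)))].
- split; rewrite ?botEset ?topEset; apply/seteqP; split => U //=.
    by apply: (uf_nbot (svP U)).
  by move=> _; apply: (uf_top (svP U)).
- split; [exact: stone_f | exact: stone_g].
Qed.

End Emb.

Section EmAx.
Context {d : Order.disp_t} (A : ctbDistrLatticeType d).
Local Open Scope order_scope.
Implicit Types (a b c : A).
Variables (f g : A -> A -> A).

Lemma ult_eq (U V : Ult A) : sv U = sv V -> U = V.
Proof.
case: U V => [U HU] [V HV] /= E; subst V; congr exist; exact: Prop_irrelevance.
Qed.

Lemma ult_sep (U V : Ult A) : U <> V -> exists c, sv U c /\ sv V (~` c).
Proof.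
move=> N; apply: contrapT => Nc; apply: N; apply: ult_eq.
have HU := svP U; have HV := svP V.
apply/seteqP; split => c Hc.
  apply: contrapT => Vc; apply: Nc; exists c; split => //.
  exact/(uf_compl _ HV).
apply: contrapT => Uc; apply: Nc; exists (~` c); split.
  exact/(uf_compl _ HU).
by rewrite complK.
Qed.

Lemma anti_r : coadditive g -> forall a b b', b <= b' -> g a b' <= g a b.
Proof. by move=> [_ gr] a b b' /join_idPl <-; rewrite gr; exact: leIr. Qed.
Lemma anti_l : coadditive g -> forall a a' b, a <= a' -> g a' b <= g a b.
Proof. by move=> [gl _] a a' b /join_idPl <-; rewrite gl; exact: leIr. Qed.

Lemma nonempty (X : set (Ult A)) : X <> \bot -> exists x, X x.
Proof.
move=> H; apply: contrapT => N; apply: H; rewrite botEset.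
by apply/seteqP; split => V //= HV; apply: N; exists V.
Qed.

Lemma Em_PS : PS_algebra f g -> PS_algebra (Em_f f) (Em_g g).
Proof.
case=> nt fn fa gn ga; split.
- rewrite /nontrivialBA botEset topEset => E.
  have [U _] : exists U : Ult A, sv U \top.
    by apply: uf_of => H; apply: nt.
  have : (setT : set (Ult A)) U by [].
  by rewrite -E.
- move=> X Y; rewrite botEset => H; apply/seteqP; split => U //=.
  by case=> x [y [Xx Yy _]]; case: H => E; rewrite E in Xx Yy.
- split.
  + move=> X X' Y; rewrite !joinEset; apply/seteqP; split => U /=.
      by case=> x [y [[Xx|Xx] Yy Q]]; [left|right]; exists x, y.
    by case=> [[x [y [Xx Yy Q]]]|[x [y [Xx Yy Q]]]]; exists x, y; split => //; [left|right].
  + move=> X Y Y'; rewrite !joinEset; apply/seteqP; split => U /=.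
      by case=> x [y [Xx [Yy|Yy] Q]]; [left|right]; exists x, y.
    by case=> [[x [y [Xx Yy Q]]]|[x [y [Xx Yy Q]]]]; exists x, y; split => //; [left|right].
- move=> X Y; rewrite botEset topEset => H; apply/seteqP; split => U //= _ x y Xx Yy.
  by exfalso; case: H => E; rewrite E in Xx Yy.
- split.
  + move=> X X' Y; rewrite !meetEset; apply/seteqP; split => U /=.
      by move=> H; split => x y Xx Yy; apply: H => //; [left|right].
    by case=> H1 H2 x y [Xx|Xx] Yy; [apply: H1|apply: H2].
  + move=> X Y Y'; rewrite !meetEset; apply/seteqP; split => U /=.
      by move=> H; split => x y Xx Yy; apply: H => //; [left|right].
    by case=> H1 H2 x y Xx [Yy|Yy]; [apply: H1|apply: H2].
Qed.

Hypothesis (fn : normal f) (fa : additive f) (gn : conormal g) (ga : coadditive g).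

Lemma Em_ABT0 : ABT0 f -> ABT0 (Em_f f).
Proof.
move=> H X; rewrite subsetEset => U XU; exists U, U; split => // a b Ha Hb.
have HU := svP U.
apply: (uf_up HU (uf_meet HU Ha Hb)).
apply: le_trans (H (a `&` b)) _.
apply: le_trans (mono_l fa _ (leIl a b)) _.
exact: (mono_r fa a (leIr b a)).
Qed.

Lemma Em_ABT1f : ABT1f f -> ABT1f (Em_f f).
Proof.
move=> H X Y; rewrite subsetEset => U [x [y [Xx Yy Q]]]; exists y, x; split => // a b Ha Hb.
exact: (uf_up (svP U) (Q b a Hb Ha) (H b a)).
Qed.

Lemma Em_ABT1g : ABT1g g -> ABT1g (Em_g g).
Proof.
move=> H X Y; rewrite subsetEset => U HS y x Yy Xx.
have [a [b [Ha Hb Hg]]] := HS x y Xx Yy.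
by exists b, a; split => //; apply: (uf_up (svP U) Hg (H a b)).
Qed.

Lemma Em_ABT2 : ABT2 f -> ABT2 (Em_f f).
Proof.
move=> H X Y Z; rewrite subsetEset meetEset => U [Yu [x [z [Xx Zz Q]]]].
exists x, z; split => //; rewrite meetEset; split => //.
exists x, U; split => // a b Ha Hb.
have Hx := svP x; have HU := svP U; have Hz := svP z.
apply: contrapT => N.
have Hc : sv x (~` f a b) by apply/(uf_compl _ Hx).
pose a' := a `&` ~` f a b.
have Ha' : sv x a' by apply: uf_meet.
have H1 : sv U (b `&` f a' \top) by apply: uf_meet => //; apply: Q => //; apply: uf_top.
have H2 := uf_up HU H1 (H a' b \top).
have E : a' `&` f a' b = \bot.
  apply/eqP; rewrite -lex0; rewrite -(meetCx (f a b)).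
  apply: leI2; first exact: leIr.
  exact: (mono_l fa b (leIl _ _)).
by move: H2; rewrite E fn; [apply: uf_nbot|left].
Qed.

Lemma Em_ABT3 : ABT3 f g -> ABT3 (Em_f f) (Em_g g).
Proof.
move=> H X Y; rewrite subsetEset => u [x [w [Xx [Gw Yw] Q]]].
apply: contrapT => Nu.
have Nuw : u <> w by move=> E; apply: Nu; rewrite E.
have [c [uc wc]] := ult_sep Nuw.
have [a [b [Ha Hb Hg]]] := Gw x u Xx Nu.
have Hx := svP x; have Hu := svP u; have Hw := svP w.
pose b' := b `&` c.
have ub' : sv u b' by apply: uf_meet.
have wg : sv w (g a b') by apply: (uf_up Hw Hg); apply: anti_r => //; exact: leIl.
have wnb : sv w (~` b') by apply: (uf_up Hw wc); rewrite leC leIr.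
have := H a (~` b'); rewrite complK => le.
have := Q a _ Ha (uf_meet Hw wg wnb) => /(uf_up Hu)/(_ le).
by move/(uf_compl _ Hu).
Qed.

Lemma S_Q x u y : wMIA f g -> S_g g x u y -> Q_f f x u y.
Proof.
move=> H [a [b [Ha Hb Hg]]] a' b' Ha' Hb'.
have Hx := svP x; have Hu := svP u; have Hy := svP y.
have Ha2 : sv x (a `&` a') by apply: uf_meet.
have Hb2 : sv y (b `&` b') by apply: uf_meet.
apply: (uf_up Hu Hg).
apply: (le_trans (anti_l ga _ (leIl a a'))).
apply: (le_trans (anti_r ga _ (leIl b b'))).
apply: (le_trans (H _ _ (uf_ne0 Hx Ha2) (uf_ne0 Hy Hb2))).
apply: (le_trans (mono_l fa _ (leIr a' a))).
exact: (mono_r fa a' (leIr b' b)).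
Qed.

Lemma Em_wMIA : wMIA f g -> wMIA (Em_f f) (Em_g g).
Proof.
move=> H X Y /nonempty [x Xx] /nonempty [y Yy]; rewrite subsetEset => u Gu.
by exists x, y; split => //; apply: S_Q => //; apply: Gu.
Qed.

Lemma Em_ABTW : ABTW g -> ABTW (Em_g g).
Proof.
move=> H X /nonempty [x Xx]; rewrite subsetEset => u Gu.
have [a [b [Ha Hb Hg]]] := Gu x x Xx Xx.
suff -> : u = x by [].
apply: contrapT => N.
have [c [xc uc]] := ult_sep (fun E => N (esym E)).
have Hx := svP x; have Hu := svP u.
pose e := a `&` b `&` c.
have xe : sv x e by apply: uf_meet => //; apply: uf_meet.
have ue : sv u e.
  apply: (uf_up Hu Hg).
  apply: (le_trans (anti_l ga _ (_ : e <= a))); first exact: (le_trans (leIl _ _) (leIl _ _)).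
  apply: (le_trans (anti_r ga _ (_ : e <= b))); first exact: (le_trans (leIl _ _) (leIr _ _)).
  exact: H (uf_ne0 Hx xe).
have uc' : sv u c by apply: (uf_up Hu ue); rewrite /e leIr.
by apply: (proj1 (uf_compl _ Hu) uc).
Qed.

Lemma Em_ABT2s : ABT2s f -> ABT2s (Em_f f).
Proof.
move=> H X Y /nonempty [y Yy]; rewrite subsetEset => u Xu.
exists u, y; split => // a b Ha Hb.
exact: (uf_up (svP u) Ha (H a b (uf_ne0 (svP y) Hb))).
Qed.

End EmAx.

Theorem theorem42 (d : Order.disp_t) (A : ctbDistrLatticeType d) (f g : A -> A -> A) :
  (betweenness_algebra f g ->
     embedding f g (Em_f f) (Em_g g) (@stone d A) /\
     betweenness_algebra (Em_f f) (Em_g g)) /\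
  (weak_betweenness_algebra f g ->
     embedding f g (Em_f f) (Em_g g) (@stone d A) /\
     weak_betweenness_algebra (Em_f f) (Em_g g)) /\
  (strong_betweenness_algebra f g ->
     embedding f g (Em_f f) (Em_g g) (@stone d A) /\
     strong_betweenness_algebra (Em_f f) (Em_g g)).
Proof.
split; [|split].
- move=> [PS [H0 [H1 [H2 [H3 [H4 H5]]]]]]; split; first exact: embed.
  have [_ fn fa gn ga] := PS.
  split; first exact: Em_PS.
  split; first exact: Em_ABT0.
  split; first exact: Em_ABT1f.
  split; first exact: Em_ABT1g.
  split; first exact: Em_ABT2.
  split; first exact: Em_ABT3.
  exact: Em_wMIA.
- move=> [PS [H0 [H1 [H2 [H3 H4]]]]]; split; first exact: embed.
  have [_ fn fa gn ga] := PS.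
  split; first exact: Em_PS.
  split; first exact: Em_ABT0.
  split; first exact: Em_ABT1f.
  split; first exact: Em_ABT1g.
  split; first exact: Em_ABT2.
  exact: Em_ABTW.
- move=> [PS [H1 [H2 [H3 [H4 H5]]]]]; split; first exact: embed.
  have [_ fn fa gn ga] := PS.
  split; first exact: Em_PS.
  split; first exact: Em_ABT1f.
  split; first exact: Em_ABT1g.
  split; first exact: Em_ABT3.
  split; first exact: Em_wMIA.
  exact: Em_ABT2s.
Qed.
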